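(* Let $\mathbf{F}$ be a field of characteristic $2$, $m\ge1$, and $A,B\in\{0,1\}^m$ with $|A|,|B|\ge2$. The following elements of $Q$ lie in $\ker(\pi)$. (a) If $A\cap B=\emptyset$, let $j\in B$ and $B'=B-\Delta_j$. Then $$\mathrm{Tr}(A)\mathrm{Tr}(B)+\mathrm{Tr}(A+\Delta_j)\mathrm{Tr}(B')+x_j\mathrm{Tr}(A+B')+x_j\mathrm{Tr}(A)\mathrm{Tr}(B')\in\ker(\pi).$$ (b) If $|A\cap B|\ge1$ and $B\le A$, let $i\in A\cap B$, $B'=B-\Delta_i$, $A'=A-\Delta_i$, and $J=A\setminus B$. Then $$\mathrm{Tr}(A)\mathrm{Tr}(B)+x_i\mathrm{Tr}(A)\mathrm{Tr}(B')+N_i\mathrm{Tr}(A')\mathrm{Tr}(B')+x_iN^{B'}\mathrm{Tr}(J+\Delta_i)\in\ker(\pi).$$ (c) If $|A\cap B|\ge1$, $A\not\le B$ and $B\not\le A$, put $I=A\cap B$, $J=A\setminus B$, $K=B\setminus A$. Then $$\mathrm{Tr}(A)\mathrm{Tr}(B)+\mathrm{Tr}(I+J+K)\mathrm{Tr}(I)+N^I\mathrm{Tr}(J)\mathrm{Tr}(K)\in\ker(\pi).$$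
   Context: Let $S=\mathbf{F}[x_1,y_1,\dots,x_m,y_m]$ with the $\mathbf{F}$-algebra automorphism $\sigma(x_i)=x_i$, $\sigma(y_i)=y_i+x_i$ of order 2, and let $S^{C_2}$ be the ring of $\sigma$-invariants. For $A=(a_1,\dots,a_m)\in\mathbb{N}^m$ write $x^A=\prod_s x_s^{a_s}$, $y^A=\prod_s y_s^{a_s}$, $N^A=\prod_s N_s^{a_s}$ where $N_s=y_s^2+x_sy_s$, $|A|=\sum_s a_s$. $A\le B$ means componentwise $\le$; sums/differences of sequences are componentwise. Elements of $\{0,1\}^m$ are identified with subsets of $\{1,\dots,m\}$; $\cap,\setminus$ are set operations and $i\in A$ means $a_i=1$. $\Delta_s$ has $1$ in position $s$ and $0$ elsewhere. For $A\in\{0,1\}^m$, $\mathrm{tr}(A)=y^A+\prod_s(y_s+x_s)^{a_s}$. Let $R=\mathbf{F}[x_1,\dots,x_m,N_1,\dots,N_m]$ (polynomial ring in $2m$ indeterminates), $Q=R[\mathrm{Tr}(A):A\in\{0,1\}^m,|A|\ge2]$ (polynomial ring), and $\pi:Q\to S^{C_2}$ the $\mathbf{F}$-algebra homomorphism with $\pi(x_i)=x_i$, $\pi(N_i)=y_i^2+x_iy_i$, $\pi(\mathrm{Tr}(A))=\mathrm{tr}(A)$. Convention: for $C$ with $|C|\le1$, $\mathrm{Tr}(0)=0$ and $\mathrm{Tr}(\Delta_s)=x_s$ in $Q$. *)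

(* Defs.v *)
From HB Require Import structures.
From mathcomp Require Import all_boot all_order all_algebra.
From mathcomp Require Export mpoly.
Set Implicit Arguments. Unset Strict Implicit. Unset Printing Implicit Defensive.
Import Order.TTheory GRing.Theory.
Local Open Scope ring_scope.

Section Defs.
Variables (F : fieldType) (m : nat).

Definition Sring := {mpoly F[m + m]}.
Definition Sx (i : 'I_m) : Sring := 'X_(lshift m i).
Definition Sy (i : 'I_m) : Sring := 'X_(rshift m i).
Definition SN (i : 'I_m) : Sring := Sy i ^+ 2 + Sx i * Sy i.
Definition sigma (p : Sring) : Sring :=
  mmap (@mpolyC _ F) (fun k : 'I_(m + m) =>
    match split k with inl i => Sx i | inr i => Sy i + Sx i end) p.
Definition str (A : {set 'I_m}) : Sring :=
  \prod_(s in A) Sy s + \prod_(s in A) (Sy s + Sx s).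
Definition SNpow (A : {set 'I_m}) : Sring := \prod_(s in A) SN s.

(* Q = F[x_1..x_m, N_1..N_m, Tr(A) : |A| >= 2]; the indeterminates are
   indexed by the finite type QVar, enumerated via enum_rank. *)
Definition QVar := ('I_m + 'I_m + {A : {set 'I_m} | (1 < #|A|)%N})%type.
Definition nQ := #|{: QVar}|.
Definition Qring := {mpoly F[nQ]}.
Definition QX (v : QVar) : Qring := 'X_(enum_rank v).
Definition Qx (i : 'I_m) : Qring := QX (inl (inl i)).
Definition QN (i : 'I_m) : Qring := QX (inl (inr i)).
(* Tr(A) in Q, with the convention Tr(0) = 0 and Tr(Delta_s) = x_s *)
Definition QTr (A : {set 'I_m}) : Qring :=
  match @insub _ (fun A : {set 'I_m} => (1 < #|A|)%N) _ A with
  | Some B => QX (inr B)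
  | None => if [pick s in A] is Some s then Qx s else 0
  end.
Definition QNpow (A : {set 'I_m}) : Qring := \prod_(s in A) QN s.

(* pi : Q -> S^{C_2} (viewed inside S), the F-algebra map
   x_i |-> x_i, N_i |-> y_i^2 + x_i y_i, Tr(A) |-> tr(A) *)
Definition piv (v : QVar) : Sring :=
  match v with
  | inl (inl i) => Sx i
  | inl (inr i) => SN i
  | inr A => str (val A)
  end.
Definition piQ (p : Qring) : Sring :=
  mmap (@mpolyC _ F) (fun k : 'I_nQ => piv (enum_val k)) p.

End Defs.

Arguments Sx {F m}. Arguments Sy {F m}. Arguments SN {F m}. Arguments str {F m}.
Arguments SNpow {F m}. Arguments QX {F m}. Arguments Qx {F m}. Arguments QN {F m}.
Arguments QTr {F m}. Arguments QNpow {F m}. Arguments piv {F m}. Arguments piQ {F m}.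
Arguments sigma {F m}.

(* Main.v *)
Require Import Defs.
From HB Require Import structures.
From mathcomp Require Import all_boot all_order all_algebra.
From mathcomp Require Import mpoly ring.
Import GRing.Theory.
Local Open Scope ring_scope.

Section S.
Variables (F : fieldType) (m : nat) (hF : 2%N \in [pchar F]).

Lemma two0 : 2%:R = 0 :> Sring F m.
Proof. have := pcharf0 hF => h2. by rewrite -(rmorph_nat (@mpolyC _ F)) h2 raddf0. Qed.

Lemma piQD (p q : Qring F m) : piQ (p + q) = piQ p + piQ q.
Proof. by rewrite /piQ rmorphD. Qed.
Lemma piQM (p q : Qring F m) : piQ (p  *  q) = piQ p  *  piQ q.
Proof. by rewrite /piQ rmorphM. Qed.
Lemma piQX v : piQ (QX v) = piv v :> Sring F m.
Proof. by rewrite /piQ /QX mmapX mmap1U enum_rankK. Qed.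
Lemma piQ0 : piQ (0 : Qring F m) = 0.
Proof. by rewrite /piQ raddf0. Qed.
Lemma oppE (x : Sring F m) : - x = x.
Proof. by apply/eqP; rewrite eq_sym -subr_eq0 opprK -mulr2n -mulr_natr two0 mulr0. Qed.
Lemma addxx (x : Sring F m) : x + x = 0.
Proof. by rewrite -mulr2n -mulr_natr two0 mulr0. Qed.

Lemma piQTr (C : {set 'I_m}) : piQ (QTr C) = str C :> Sring F m.
Proof.
rewrite /QTr; case: insubP => [B hB hv|hC].
  by rewrite piQX /= hv.
case: pickP => [s hs|h0].
  rewrite /Qx piQX /=.
  have -> : C = [set s].
    apply/eqP; rewrite eq_sym eqEcard sub1set hs cards1 /=.
    by rewrite leqNgt.
  by rewrite /str !big_set1 addrA addxx add0r.
have -> : C = set0 by apply/setP=> x; rewrite inE h0.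
by rewrite piQ0 /str !big_set0 addxx.
Qed.

Lemma piQNpow (C : {set 'I_m}) : piQ (QNpow C) = (\prod_(s in C) Sy s  *  \prod_(s in C) (Sy s + Sx s) : Sring F m).
Proof.
rewrite /QNpow -big_split /=.
elim/big_rec2: _ => [|i x y _ <-]; first by rewrite /piQ rmorph1.
by rewrite piQM /QN piQX /= /SN; ring.
Qed.
Lemma piQx i : piQ (Qx i) = Sx i :> Sring F m.
Proof. by rewrite /Qx piQX. Qed.
Lemma piQN i : piQ (QN i) = SN i :> Sring F m.
Proof. by rewrite /QN piQX. Qed.
Lemma prodU (C D : {set 'I_m}) (f : 'I_m -> Sring F m) : [disjoint C & D] ->
  \prod_(s in C :|: D) f s = \prod_(s in C) f s  *  \prod_(s in D) f s.
Proof.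
move=> hd; rewrite -bigU //; apply: eq_bigl => x; by rewrite !inE.
Qed.

Lemma partA (A B : {set 'I_m}) : A :&: B = set0 -> forall j, j \in B ->
   let B' := B :\ j in
   piQ (QTr A  *  QTr B + QTr (j |: A)  *  QTr B' + Qx j  *  QTr (A :|: B')
        + Qx j  *  QTr A  *  QTr B') = 0 :> Sring F m.
Proof.
move=> hAB j hj B'.
have hjA : j \notin A.
  by apply/negP=> hjA; move/setP: hAB => /(_ j); rewrite !inE hjA hj.
have hdis : [disjoint A & B'].
  rewrite -setI_eq0; apply/eqP/setP=> x; move/setP: hAB => /(_ x).
  by rewrite !inE; case: (x \in A); case: (x \in B); case: (x == j).
rewrite !piQD !piQM !piQTr piQx /str.
rewrite (big_setD1 j hj) (big_setD1 j hj (F := fun s => Sy s + Sx s)).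
rewrite !big_setU1 //= !prodU //=.
have hx : Sx j = Sy j + (Sy j + Sx j) :> Sring F m by rewrite addrA addxx add0r.
move: hx; set z := Sy j + Sx j; move=> ->.
set y := Sy j.
set a := \prod_(s in A) Sy s. set a' := \prod_(s in A) (Sy s + Sx s).
set b := \prod_(s in B') Sy s. set b' := \prod_(s in B') (Sy s + Sx s).
clearbody z y a a' b b'.
transitivity (2%:R  *  (y * (2%:R * a * b + a' * b + a * b' + a' * b') + z * (a * b+a * b'+a' * b+2%:R * a' * b'))).
  ring.
by rewrite two0 mul0r.
Qed.
Lemma partB (A B : {set 'I_m}) : B \subset A ->
   forall i : 'I_m, i \in A :&: B ->
   let B' := B :\ i in let A' := A :\ i in let J := A :\: B in
   piQ (QTr A  *  QTr B + Qx i  *  QTr A  *  QTr B' + QN i  *  QTr A'  *  QTr B'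
        + Qx i  *  QNpow B'  *  QTr (i |: J)) = 0 :> Sring F m.
Proof.
move=> hsub i hi B' A' J.
have hiA : i \in A by move: hi; rewrite inE => /andP[].
have hiB : i \in B by move: hi; rewrite inE => /andP[].
have hiJ : i \notin J by rewrite /J inE hiB.
have hA' : A :\ i = J :|: B'.
  apply/setP=> x; rewrite /J /B' !inE.
  case hB: (x \in B) => /=; first by rewrite (subsetP hsub x hB).
  rewrite andbF orbF; case: eqP => [exi|_] //.
  by move: hB; rewrite exi hiB.
have hdis : [disjoint J & B'].
  rewrite -setI_eq0; apply/eqP/setP=> x; rewrite /J /B' !inE.
  by case: (x \in A); case: (x \in B); case: (x == i).
rewrite !piQD !piQM !piQTr piQx piQN piQNpow /str /A'.
rewrite (big_setD1 i hiA) (big_setD1 i hiA (F := fun s => Sy s + Sx s)).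
rewrite (big_setD1 i hiB) (big_setD1 i hiB (F := fun s => Sy s + Sx s)).
rewrite hA' !big_setU1 //= !prodU //=.
have hN : SN i = Sy i  *  (Sy i + Sx i) :> Sring F m by rewrite /SN; ring.
rewrite hN.
have hx : Sx i = Sy i + (Sy i + Sx i) :> Sring F m by rewrite addrA addxx add0r.
move: hx; set z := Sy i + Sx i; move=> ->.
set y := Sy i.
set p := \prod_(s in J) Sy s. set p' := \prod_(s in J) (Sy s + Sx s).
set q := \prod_(s in B') Sy s. set q' := \prod_(s in B') (Sy s + Sx s).
clearbody z y p p' q q'.
transitivity (2%:R  *  (y^+2 * (p * q^+2+p * q * q') + z^+2 * (p' * q'^+2+p' * q * q')
   + y * z * (p * q^+2 + 2%:R * p * q * q' + 2%:R * p' * q * q' + p' * q'^+2))).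
  ring.
by rewrite two0 mul0r.
Qed.

Lemma partC (A B : {set 'I_m}) :
   let I := A :&: B in let J := A :\: B in let K := B :\: A in
   piQ (QTr A  *  QTr B + QTr (I :|: J :|: K)  *  QTr I
        + QNpow I  *  QTr J  *  QTr K) = 0 :> Sring F m.
Proof.
move=> I J K.
have hA : A = I :|: J by rewrite /I /J setID.
have hB : B = I :|: K by rewrite /I /K setIC setID.
have d1 : [disjoint I & J].
  rewrite -setI_eq0; apply/eqP/setP=> x; rewrite /I /J !inE.
  by case: (x \in A); case: (x \in B).
have d2 : [disjoint I & K].
  rewrite -setI_eq0; apply/eqP/setP=> x; rewrite /I /K !inE.
  by case: (x \in A); case: (x \in B).
have d3 : [disjoint I :|: J & K].
  rewrite -setI_eq0; apply/eqP/setP=> x; rewrite /I /J /K !inE.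
  by case: (x \in A); case: (x \in B).
rewrite !piQD !piQM !piQTr piQNpow /str.
rewrite {1 2}hA {1 2}hB !prodU //.
set i := \prod_(s in I) Sy s. set i' := \prod_(s in I) (Sy s + Sx s).
set j := \prod_(s in J) Sy s. set j' := \prod_(s in J) (Sy s + Sx s).
set k := \prod_(s in K) Sy s. set k' := \prod_(s in K) (Sy s + Sx s).
clearbody i i' j j' k k'.
transitivity (2%:R  *  (i^+2 * j * k + i'^+2 * j' * k' + i * i' * (j * k'+j' * k+j * k+j' * k'))).
  ring.
by rewrite two0 mul0r.
Qed.
End S.


Theorem mainTheorem5 (F : fieldType) (hF : 2%N \in [pchar F]) (m : nat) (hm : (0 < m)%N)
    (A B : {set 'I_m}) (hA : (2 <= #|A|)%N) (hB : (2 <= #|B|)%N) :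
  (* (a) *)
  (A :&: B = set0 ->
   forall j : 'I_m, j \in B ->
   let B' := B :\ j in
   piQ (QTr A * QTr B + QTr (j |: A) * QTr B' + Qx j * QTr (A :|: B')
        + Qx j * QTr A * QTr B') = 0 :> Sring F m)
  /\
  (* (b) *)
  ((1 <= #|A :&: B|)%N -> B \subset A ->
   forall i : 'I_m, i \in A :&: B ->
   let B' := B :\ i in let A' := A :\ i in let J := A :\: B in
   piQ (QTr A * QTr B + Qx i * QTr A * QTr B' + QN i * QTr A' * QTr B'
        + Qx i * QNpow B' * QTr (i |: J)) = 0 :> Sring F m)
  /\
  (* (c) *)
  ((1 <= #|A :&: B|)%N -> ~~ (A \subset B) -> ~~ (B \subset A) ->
   let I := A :&: B in let J := A :\: B in let K := B :\: A in
   piQ (QTr A * QTr B + QTr (I :|: J :|: K) * QTr I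
        + QNpow I * QTr J * QTr K) = 0 :> Sring F m).
Proof.
split; first by move=> hAB j hj; exact: partA.
split; first by move=> _ hsub i hi; exact: partB.
by move=> _ _ _; exact: partC.
Qed.
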